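(* Let $\mathcal{F}$ be a non-trivial minor-closed class of multigraphs and let $d_{\mathcal{F}}$ be a number such that every multigraph $H\in\mathcal{F}$ satisfies $|E(H)|\le \mu(H)\cdot d_{\mathcal{F}}\cdot |V(H)|$. Let $m$ be a positive integer and $G$ a multigraph with $\mu(G)\le m$ and $\delta(G)\ge 3m\cdot d_{\mathcal{F}}$. Then for every $X\subseteq V(G)$ with $G-X\in\mathcal{F}$, \[|E(G)|\;\le\;2\sum_{v\in X}\mathrm{edeg}_G(v)\;\le\;4|E(G)|.\]
   Context: Graphs are finite multigraphs without loops, edges counted with multiplicity. $\mu(H)$ is the maximum multiplicity of an edge of $H$. $\mathrm{edeg}_G(v)$ is the edge-degree of $v$, i.e., the number of edges of $G$ incident to $v$; $\delta(G)$ is the minimum edge-degree of $G$. A class is minor-closed if it is closed under taking minors, and non-trivial if it neither contains all graphs nor is empty. *)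

(* Defs.v *)
From HB Require Import structures.
From mathcomp Require Import all_boot all_order all_algebra.
Set Implicit Arguments. Unset Strict Implicit. Unset Printing Implicit Defensive.

(* A finite loopless multigraph on the vertex type V: mult u v is the
   number of edges between u and v. *)
Record mgraph (V : finType) := MGraph {
  mult : V -> V -> nat;
  mult_sym : forall u v, mult u v = mult v u;
  mult_irr : forall v, mult v v = 0 }.

(* number of edges, counted with multiplicity (each unordered pair once) *)
Definition nedges (V : finType) (G : mgraph V) : nat :=
  \sum_(u : V) \sum_(v : V | (enum_rank u < enum_rank v)%N) mult G u v.

Definition edeg (V : finType) (G : mgraph V) (v : V) : nat :=
  \sum_(u : V) mult G v u.

Definition mu (V : finType) (G : mgraph V) : nat :=
  \max_(u : V) \max_(v : V) mult G u v.

Definition induced (V : finType) (G : mgraph V) (S : {set V})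
  : mgraph {v : V | v \in S}.
Proof.
refine (@MGraph _ (fun u v => mult G (val u) (val v)) _ _).
- by move=> u v; rewrite mult_sym.
- by move=> v; rewrite mult_irr.
Defined.

Definition delv (V : finType) (G : mgraph V) (X : {set V}) := induced G (~: X).

(* H is a minor of G: there is a model of H in G, i.e. pairwise disjoint,
   nonempty, connected branch sets phi^-1(h) (h vertex of H), such that the
   multiplicity of hh' in H is at most the number of edges of G between the
   branch sets of h and h'. (Standard characterization of minors of
   multigraphs, where contraction keeps parallel edges and deletes loops.) *)
Definition minor (W V : finType) (H : mgraph W) (G : mgraph V) : Prop :=
  exists phi : V -> option W,
    [/\ forall h : W, exists v : V, phi v = Some h,
        forall (h : W) (u v : V), phi u = Some h -> phi v = Some h ->
          connect [rel x y | [&& phi x == Some h, phi y == Some h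
                              & (0 < mult G x y)%N]] u v
      & forall h h' : W, h != h' ->
          (mult H h h' <= \sum_(u : V | phi u == Some h)
                            \sum_(v : V | phi v == Some h') mult G u v)%N].

Definition graph_class := forall V : finType, mgraph V -> Prop.

Definition minor_closed (F : graph_class) : Prop :=
  forall (V W : finType) (G : mgraph V) (H : mgraph W),
    F V G -> minor H G -> F W H.

Definition nontrivial_class (F : graph_class) : Prop :=
  (exists (V : finType) (G : mgraph V), F V G) /\
  (exists (V : finType) (G : mgraph V), ~ F V G).

(* Main.v *)
Require Import Defs.
From HB Require Import structures.
From mathcomp Require Import all_boot all_order all_algebra.
From mathcomp Require Import zify ring lra.
Import Order.TTheory GRing.Theory Num.Theory.

Lemma handshake {V : finType} (G : mgraph V) :
  \sum_(u : V) \sum_(v : V) mult G u v = 2 * nedges G.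
Proof.
rewrite /nedges.
have E : forall u, \sum_(v : V) mult G u v =
   \sum_(v | enum_rank u < enum_rank v) mult G u v +
   \sum_(v | enum_rank v < enum_rank u) mult G v u.
  move=> u; rewrite (bigID (fun v => enum_rank u < enum_rank v)) /=; congr (_ + _).
  rewrite (bigID (fun v => enum_rank v < enum_rank u)) /=.
  rewrite [X in _ + X]big1 ?addn0.
    by apply: eq_big => v; [rewrite ltnNge leq_eqVlt negb_or andbC; case: ltngtP|rewrite mult_sym].
  move=> v /andP[]; rewrite -!leqNgt => h1 h2.
  have : enum_rank u = enum_rank v by apply: val_inj; apply/eqP; rewrite eqn_leq h1 h2.
  by move/enum_rank_inj => ->; rewrite mult_irr.
rewrite (eq_bigr _ (fun u _ => E u)) big_split /=.
rewrite [X in _ + X](exchange_big_dep xpredT) //=.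
by rewrite mul2n -addnn.
Qed.

Lemma split_sum {V : finType} (X : {set V}) (F : V -> nat) :
  \sum_v F v = \sum_(v in X) F v + \sum_(v in ~: X) F v.
Proof.
rewrite (bigID (fun v => v \in X)) /=; congr (_ + _).
by apply: eq_bigl => v; rewrite in_setC.
Qed.

Local Open Scope ring_scope.

Theorem lemma7 (R : realFieldType) (F : graph_class) (d : R)
  (Fmc : minor_closed F) (Fnt : nontrivial_class F)
  (Fd : forall (W : finType) (H : mgraph W), F W H ->
          (nedges H)%:R <= (mu H)%:R * d * #|W|%:R)
  (m : nat) (hm : (0 < m)%N)
  (V : finType) (G : mgraph V) (hmu : (mu G <= m)%N)
  (hdeg : forall v : V, (3 * m)%:R * d <= (edeg G v)%:R)
  (X : {set V}) (hX : F _ (delv G X)) :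
  (nedges G <= 2 * \sum_(v in X) edeg G v <= 4 * nedges G)%N.
Proof.
set e := fun (A B : {set V}) => (\sum_(u in A) \sum_(v in B) mult G u v)%N.
have hS : (\sum_(v in X) edeg G v = e X X + e X (~: X))%N.
  by rewrite /e -big_split /=; apply: eq_bigr => u _; rewrite /edeg (split_sum X).
have hSY : (\sum_(v in ~: X) edeg G v = e (~: X) X + e (~: X) (~: X))%N.
  by rewrite /e -big_split /=; apply: eq_bigr => u _; rewrite /edeg (split_sum X).
have hE : (2 * nedges G = e X X + e X (~: X) + (e (~: X) X + e (~: X) (~: X)))%N.
  rewrite -handshake (split_sum X) -hS -hSY; congr (_ + _); apply: eq_bigr => v _;
  exact: (split_sum X).
have hsym : e (~: X) X = e X (~: X).
  rewrite /e exchange_big /=; apply: eq_bigr => u _; apply: eq_bigr => v _; exact: mult_sym.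
set H := delv G X.
have hH : (2 * nedges H = e (~: X) (~: X))%N.
  rewrite -handshake /e [RHS](big_sub (~: X)); apply: eq_bigr => u _.
  by rewrite [RHS](big_sub (~: X)).
have hmuH : (mu H <= m)%N.
  apply: leq_trans hmu; apply/bigmax_leqP => u _; apply/bigmax_leqP => v _.
  apply: leq_trans (leq_bigmax (val u)); exact: (leq_bigmax (F := fun v => mult G (val u) v) (val v)).
have hk : #|{: {v : V | v \in ~: X}}| = #|~: X|.
  by rewrite card_sig; apply: eq_card => v.
have hFd := Fd _ _ hX; rewrite -/H hk in hFd.
have hsumdeg : (#|~: X| * (3 * m))%:R * d <= (\sum_(v in ~: X) edeg G v)%:R :> R.
  rewrite natr_sum natrM -mulrA mulr_natl -sumr_const.
  by apply: ler_sum => v _.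
have key : (nedges H <= e X (~: X))%N.
  rewrite -(ler_nat R).
  rewrite hSY hsym natrD -hH natrM !natrM in hsumdeg.
  have h0 : 0 <= (mu H)%:R :> R by [].
  have h1 : (mu H)%:R <= m%:R :> R by rewrite ler_nat.
  have h2 : 0 <= #|~: X|%:R :> R by [].
  case: (lerP 0 d) => hd.
  - have : (mu H)%:R * d * #|~: X|%:R <= m%:R * d * #|~: X|%:R :> R.
      by apply: ler_wpM2r => //; apply: ler_wpM2r.
    move: hsumdeg hFd; set a := (nedges H)%:R; set b := (e X (~: X))%:R.
    set k := #|~: X|%:R; set M := m%:R; set mh := (mu H)%:R.
    move=> h3 h4 h5.
    have h6 : k * (3 * M) * d = 3 * (M * d * k) by ring.
    rewrite h6 in h3. lra.
  - have : (mu H)%:R * d * #|~: X|%:R <= 0 :> R.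
      rewrite -mulrA mulrC -mulrA; apply: mulr_le0_ge0 => //.
        exact: ltW.
      exact: mulr_ge0.
    move=> h; have := le_trans hFd h; rewrite lern0 => /eqP ->; by [].
apply/andP; split.
- rewrite hS; lia.
- rewrite hS; lia.
Qed.
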